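(* Let $M$ be a $d$-disk system and let $\lambda,\lambda'\ge0$ satisfy $\sqrt{2d/(d+1)}\,\lambda'\le\lambda$. Then $$\mathcal{VR}_M(\lambda')\subseteq\mathscr C_M(\lambda)\subseteq\mathcal{VR}_M(\lambda).$$
   Context: A $d$-disk system is a finite collection $M=\{D(c_i;r_i)\}_{i=1}^m$ of closed Euclidean balls in $\mathbb R^d$ with $r_i>0$. For $\lambda\ge0$: $\mathscr C_M(\lambda)$ is the set of nonempty subsets $\sigma\subseteq M$ such that $\bigcap_{D(c_i;r_i)\in\sigma}D(c_i;\lambda r_i)\ne\emptyset$ (generalized Čech complex at scale $\lambda$), and $\mathcal{VR}_M(\lambda)$ is the set of nonempty subsets $\sigma\subseteq M$ such that $D(c_i;\lambda r_i)\cap D(c_j;\lambda r_j)\neq\emptyset$ for all $D(c_i;r_i),D(c_j;r_j)\in\sigma$ (generalized Vietoris–Rips complex at scale $\lambda$). *)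

(* Defs.v *)
From Stdlib Require Import Reals List.
Open Scope R_scope.

(* A point of R^d is represented by a function nat -> R; only the
   coordinates 0, ..., d-1 are relevant (the others are ignored). *)
Definition point := nat -> R.

Definition edist (d : nat) (x y : point) : R :=
  sqrt (fold_right Rplus 0 (map (fun k => (x k - y k) ^ 2) (seq 0 d))).

Definition in_ball (d : nat) (c : point) (rho : R) (x : point) : Prop :=
  edist d x c <= rho.

(* A d-disk system M = {D(c i; r i)}_{i < m}: indices 0..m-1, all r i > 0. *)
Definition disk_system (m : nat) (r : nat -> R) : Prop :=
  forall i, (i < m)%nat -> 0 < r i.

Definition nonempty_subset (m : nat) (sigma : nat -> Prop) : Prop :=
  (forall i, sigma i -> (i < m)%nat) /\ (exists i, sigma i).

Definition Cech (d m : nat) (c : nat -> point) (r : nat -> R) (lam : R)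
  (sigma : nat -> Prop) : Prop :=
  nonempty_subset m sigma /\
  exists x : point, forall i, sigma i -> in_ball d (c i) (lam * r i) x.

Definition VR (d m : nat) (c : nat -> point) (r : nat -> R) (lam : R)
  (sigma : nat -> Prop) : Prop :=
  nonempty_subset m sigma /\
  forall i j, sigma i -> sigma j ->
    exists x : point, in_ball d (c i) (lam * r i) x /\ in_ball d (c j) (lam * r j) x.

(* Main.v *)
Require Import Defs.
From Stdlib Require Import Reals Lra Lia Psatz List Arith Classical ClassicalEpsilon.
Open Scope R_scope.


Definition sumL (l : list nat) (f : nat -> R) : R :=
  fold_right (fun p acc => f p + acc) 0 l.

Lemma sumL_nil f : sumL nil f = 0. Proof. reflexivity. Qed.
Lemma sumL_cons a l f : sumL (a :: l) f = f a + sumL l f. Proof. reflexivity. Qed.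

Lemma sumL_app l m f : sumL (l ++ m) f = sumL l f + sumL m f.
Proof. induction l; simpl; [lra|]. unfold sumL in *; simpl. rewrite IHl; lra. Qed.

Lemma sumL_ext l f g : (forall p, In p l -> f p = g p) -> sumL l f = sumL l g.
Proof.
  induction l as [|a l IH]; intros H; [reflexivity|].
  rewrite !sumL_cons. rewrite (H a (or_introl eq_refl)), IH; [reflexivity|].
  intros p Hp; apply H; right; exact Hp.
Qed.

Lemma sumL_plus l f g : sumL l (fun p => f p + g p) = sumL l f + sumL l g.
Proof. induction l; rewrite ?sumL_nil, ?sumL_cons; [lra|]. rewrite IHl; lra. Qed.

Lemma sumL_scal l c f : sumL l (fun p => c * f p) = c * sumL l f.
Proof. induction l; rewrite ?sumL_nil, ?sumL_cons; [lra|]. rewrite IHl; lra. Qed.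

Lemma sumL_scalr l c f : sumL l (fun p => f p * c) = sumL l f * c.
Proof. induction l; rewrite ?sumL_nil, ?sumL_cons; [lra|]. rewrite IHl; lra. Qed.

Lemma sumL_opp l f : sumL l (fun p => - f p) = - sumL l f.
Proof. induction l; rewrite ?sumL_nil, ?sumL_cons; [lra|]. rewrite IHl; lra. Qed.

Lemma sumL_minus l f g : sumL l (fun p => f p - g p) = sumL l f - sumL l g.
Proof. induction l; rewrite ?sumL_nil, ?sumL_cons; [lra|]. rewrite IHl; lra. Qed.

Lemma sumL_zero l : sumL l (fun _ => 0) = 0.
Proof. induction l; rewrite ?sumL_nil, ?sumL_cons; [lra|]. rewrite IHl; lra. Qed.

Lemma sumL_const l c : sumL l (fun _ => c) = INR (length l) * c.
Proof.
  induction l; rewrite ?sumL_nil, ?sumL_cons; simpl length; [simpl; lra|].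
  rewrite IHl, S_INR; lra.
Qed.

Lemma sumL_le l f g : (forall p, In p l -> f p <= g p) -> sumL l f <= sumL l g.
Proof.
  induction l as [|a l IH]; intros H; rewrite ?sumL_nil, ?sumL_cons; [lra|].
  assert (f a <= g a) by (apply H; left; reflexivity).
  assert (sumL l f <= sumL l g) by (apply IH; intros; apply H; right; assumption).
  lra.
Qed.

Lemma sumL_nonneg l f : (forall p, In p l -> 0 <= f p) -> 0 <= sumL l f.
Proof. intros H. rewrite <- (sumL_zero l). apply sumL_le. exact H. Qed.

Lemma sumL_pos l f : l <> nil -> (forall p, In p l -> 0 < f p) -> 0 < sumL l f.
Proof.
  destruct l as [|a l]; intros Hn H; [congruence|].
  rewrite sumL_cons.
  assert (0 < f a) by (apply H; left; reflexivity).
  assert (0 <= sumL l f) by (apply sumL_nonneg; intros; left; apply H; right; assumption).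
  lra.
Qed.

Lemma sumL_eq0_nonneg l f : (forall p, In p l -> 0 <= f p) -> sumL l f = 0 ->
  forall p, In p l -> f p = 0.
Proof.
  induction l as [|a l IH]; intros H Hs p Hp; [destruct Hp|].
  rewrite sumL_cons in Hs.
  assert (0 <= f a) by (apply H; left; reflexivity).
  assert (0 <= sumL l f) by (apply sumL_nonneg; intros; apply H; right; assumption).
  destruct Hp as [<-|Hp]; [lra|].
  apply IH; auto; [intros; apply H; right; assumption | lra].
Qed.

Lemma sumL_swap l m f :
  sumL l (fun p => sumL m (fun q => f p q)) = sumL m (fun q => sumL l (fun p => f p q)).
Proof.
  induction l as [|a l IH]; rewrite ?sumL_nil, ?sumL_cons.
  - symmetry; apply sumL_zero.
  - rewrite IH. rewrite <- sumL_plus. reflexivity.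
Qed.

Lemma sumL_prod l m f g :
  sumL l (fun p => sumL m (fun q => f p * g q)) = sumL l f * sumL m g.
Proof.
  rewrite <- sumL_scalr. apply sumL_ext. intros p _. apply sumL_scal.
Qed.

Lemma sumL_remove l p f : NoDup l -> In p l ->
  sumL l f = f p + sumL (remove Nat.eq_dec p l) f.
Proof.
  induction l as [|a l IH]; intros Hnd Hp; [destruct Hp|].
  inversion Hnd; subst. rewrite sumL_cons. simpl remove.
  destruct (Nat.eq_dec p a) as [e|ne].
  - subst. rewrite notin_remove by assumption. reflexivity.
  - rewrite sumL_cons. destruct Hp as [e|Hp]; [congruence|].
    rewrite (IH H2 Hp). lra.
Qed.

Lemma sumL_delta l p g : NoDup l -> In p l ->
  sumL l (fun q => if Nat.eq_dec p q then g q else 0) = g p.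
Proof.
  intros Hnd Hp. rewrite (sumL_remove l p) by assumption.
  destruct (Nat.eq_dec p p) as [_|n]; [|congruence].
  rewrite (sumL_ext _ _ (fun _ => 0)). { rewrite sumL_zero; lra. }
  intros q Hq. destruct (Nat.eq_dec p q); [|reflexivity].
  subst. exfalso. exact (remove_In _ _ _ Hq).
Qed.

Definition dot (d : nat) (x y : point) : R := sumL (seq 0 d) (fun k => x k * y k).
Definition n2 (d : nat) (x : point) : R := dot d x x.
Definition vsub (x y : point) : point := fun k => x k - y k.

Lemma fold_map_sumL l g : fold_right Rplus 0 (map g l) = sumL l g.
Proof. induction l; simpl; [reflexivity|]. rewrite IHl; reflexivity. Qed.

Lemma edist_eq d x y : edist d x y = sqrt (n2 d (vsub x y)).
Proof.
  unfold edist, n2, dot, vsub. rewrite fold_map_sumL. f_equal.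
  apply sumL_ext. intros; ring.
Qed.

Lemma n2_nonneg d x : 0 <= n2 d x.
Proof. apply sumL_nonneg. intros; nra. Qed.

Lemma n2_lin d al be a b :
  n2 d (fun k => al * a k + be * b k) = al^2 * n2 d a + 2*al*be*dot d a b + be^2 * n2 d b.
Proof.
  unfold n2, dot.
  rewrite (sumL_ext _ _ (fun k => al^2 * (a k * a k) + (2*al*be*(a k * b k) + be^2*(b k * b k))))
    by (intros; ring).
  rewrite !sumL_plus, !sumL_scal. ring.
Qed.

Lemma n2_zero_dot d a b : n2 d a = 0 -> dot d a b = 0.
Proof.
  intros H. unfold n2, dot in *.
  assert (Ha : forall k, In k (seq 0 d) -> a k * a k = 0).
  { apply sumL_eq0_nonneg; [intros; nra | exact H]. }
  rewrite (sumL_ext _ _ (fun _ => 0)); [apply sumL_zero|].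
  intros k Hk. specialize (Ha k Hk). apply Rmult_integral in Ha.
  destruct Ha as [Ha|Ha]; rewrite Ha; ring.
Qed.

Lemma dot_sym d a b : dot d a b = dot d b a.
Proof. unfold dot; apply sumL_ext; intros; ring. Qed.

Lemma cauchy d a b s : s = 1 \/ s = -1 ->
  s * dot d a b <= sqrt (n2 d a) * sqrt (n2 d b).
Proof.
  intros Hs.
  set (A := sqrt (n2 d a)). set (B := sqrt (n2 d b)).
  assert (HA : A * A = n2 d a) by (apply sqrt_sqrt, n2_nonneg).
  assert (HB : B * B = n2 d b) by (apply sqrt_sqrt, n2_nonneg).
  assert (A0 : 0 <= A) by apply sqrt_pos. assert (B0 : 0 <= B) by apply sqrt_pos.
  destruct (Req_dec A 0) as [Az|Anz].
  { rewrite n2_zero_dot by nra. rewrite Az. nra. }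
  destruct (Req_dec B 0) as [Bz|Bnz].
  { rewrite dot_sym, n2_zero_dot by nra. rewrite Bz. nra. }
  pose proof (n2_nonneg d (fun k => B * a k + (- s * A) * b k)) as H.
  rewrite n2_lin in H.
  assert (s * s = 1) by (destruct Hs; subst; lra).
  assert (0 < A * B) by (apply Rmult_lt_0_compat; lra).
  assert (H' : 0 <= (A * B) * (2 * (A * B) - 2 * (s * dot d a b))).
  { replace ((A * B) * (2 * (A * B) - 2 * (s * dot d a b)))
      with (B ^ 2 * n2 d a + 2 * B * (- s * A) * dot d a b + (- s * A) ^ 2 * n2 d b); [exact H|].
    rewrite <- HA, <- HB. replace ((- s * A) ^ 2) with (s * s * A^2) by ring.
    rewrite H0. ring. }
  nra.
Qed.


Lemma dot_ext d x y x' y' : (forall k, x k = x' k) -> (forall k, y k = y' k) -> dot d x y = dot d x' y'.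
Proof. intros H1 H2; unfold dot; apply sumL_ext; intros; rewrite H1, H2; reflexivity. Qed.
Lemma n2_ext d x x' : (forall k, x k = x' k) -> n2 d x = n2 d x'.
Proof. intros; apply dot_ext; assumption. Qed.

Lemma n2_vsub d x y : n2 d (vsub x y) = n2 d x - 2 * dot d x y + n2 d y.
Proof.
  rewrite (n2_ext d _ (fun k => 1 * x k + (-1) * y k)) by (intros; unfold vsub; ring).
  rewrite n2_lin. ring.
Qed.

Section Weights.
Variables (d n : nat) (cc : nat -> point) (rr : nat -> R).

Definition Xa (a : nat -> R) : point := fun k => sumL (seq 0 n) (fun p => a p * cc p k).
Definition Va (a : nat -> R) : R :=
  sumL (seq 0 n) (fun p => a p * n2 d (cc p)) - n2 d (Xa a).
Definition Pa (a : nat -> R) : R := sumL (seq 0 n) (fun p => a p * rr p ^ 2).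
Definition ha (a : nat -> R) : R := Va a / Pa a.
Definition simplex (a : nat -> R) : Prop :=
  (forall p, In p (seq 0 n) -> 0 <= a p) /\ sumL (seq 0 n) a = 1.

Lemma dot_Xa a y : dot d (Xa a) y = sumL (seq 0 n) (fun p => a p * dot d (cc p) y).
Proof.
  unfold dot, Xa.
  rewrite (sumL_ext (seq 0 d) _ (fun k => sumL (seq 0 n) (fun p => a p * (cc p k * y k)))).
  2:{ intros k _. rewrite <- sumL_scalr. apply sumL_ext; intros; ring. }
  rewrite sumL_swap. apply sumL_ext. intros p _. rewrite sumL_scal. reflexivity.
Qed.

Lemma V_alt a : simplex a ->
  Va a = sumL (seq 0 n) (fun p => a p * n2 d (vsub (cc p) (Xa a))).
Proof.
  intros [_ Hs].
  rewrite (sumL_ext _ _ (fun p => a p * n2 d (cc p) + (- 2 * (a p * dot d (cc p) (Xa a))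
     + a p * n2 d (Xa a)))).
  2:{ intros p _. rewrite n2_vsub. ring. }
  rewrite !sumL_plus, sumL_scal, sumL_scalr, Hs.
  rewrite <- dot_Xa. unfold Va, n2. ring.
Qed.

Lemma V_nonneg a : simplex a -> 0 <= Va a.
Proof.
  intros Hs. rewrite V_alt by exact Hs. apply sumL_nonneg.
  intros p Hp. apply Rmult_le_pos; [apply (proj1 Hs p Hp)| apply n2_nonneg].
Qed.

Hypothesis rr_pos : forall p, In p (seq 0 n) -> 0 < rr p.

Lemma P_pos a : simplex a -> 0 < Pa a.
Proof.
  intros [Hnn Hs].
  assert (H0 : 0 <= Pa a).
  { apply sumL_nonneg. intros p Hp. specialize (Hnn p Hp). specialize (rr_pos p Hp). nra. }
  destruct (Req_dec (Pa a) 0) as [Hz|Hz]; [|lra].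
  exfalso.
  assert (Hall : forall p, In p (seq 0 n) -> a p * rr p ^ 2 = 0).
  { apply sumL_eq0_nonneg; [|exact Hz]. intros p Hp. specialize (Hnn p Hp). specialize (rr_pos p Hp). nra. }
  assert (sumL (seq 0 n) a = 0).
  { rewrite (sumL_ext _ _ (fun _ => 0)); [apply sumL_zero|].
    intros p Hp. specialize (Hall p Hp). specialize (rr_pos p Hp).
    apply Rmult_integral in Hall. destruct Hall as [H|H]; [exact H|].
    exfalso. assert (0 < rr p ^ 2) by (apply pow_lt; lra). lra. }
  lra.
Qed.

Lemma Xa_zero_sum a : simplex a -> forall k,
  sumL (seq 0 n) (fun p => a p * (cc p k - Xa a k)) = 0.
Proof.
  intros [_ Hs] k.
  rewrite (sumL_ext _ _ (fun p => a p * cc p k - a p * Xa a k)) by (intros; ring).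
  rewrite sumL_minus, sumL_scalr, Hs. unfold Xa at 1. ring.
Qed.

Section Env.
Variable a : nat -> R.
Hypothesis Ha : simplex a.
Hypothesis Hmax : forall b, simplex b -> ha b <= ha a.

Lemma envelope j : In j (seq 0 n) -> n2 d (vsub (cc j) (Xa a)) <= ha a * rr j ^ 2.
Proof.
  intros Hj.
  set (X := Xa a). set (V := Va a). set (P := Pa a).
  set (D := n2 d (vsub (cc j) X)).
  assert (HP : 0 < P) by (apply P_pos; exact Ha).
  assert (HV : 0 <= V) by (apply V_nonneg; exact Ha).
  assert (Hr : 0 < rr j ^ 2) by (apply pow_lt; apply rr_pos; exact Hj).
  assert (HND := seq_NoDup n 0).
  assert (Key : forall t, 0 < t <= 1 -> (1 - t) * D * P <= V * rr j ^ 2).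
  { intros t Ht.
    set (b := fun p => (1 - t) * a p + t * (if Nat.eq_dec j p then 1 else 0)).
    assert (Hb : simplex b).
    { destruct Ha as [Hnn Hs]. split.
      - intros p Hp. unfold b. specialize (Hnn p Hp). destruct (Nat.eq_dec j p); nra.
      - unfold b. rewrite sumL_plus, sumL_scal, sumL_scal, Hs.
        rewrite (sumL_delta _ j (fun _ => 1)) by assumption. ring. }
    assert (HXb : forall k, Xa b k = (1 - t) * X k + t * cc j k).
    { intros k. unfold Xa, b, X, Xa.
      rewrite (sumL_ext _ _ (fun p => (1 - t) * (a p * cc p k) +
         t * (if Nat.eq_dec j p then cc p k else 0))).
      2:{ intros p _. destruct (Nat.eq_dec j p); ring. }
      rewrite sumL_plus, !sumL_scal, (sumL_delta _ j (fun p => cc p k)) by assumption.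
      reflexivity. }
    assert (HVb : Va b = (1 - t) * V + t * (1 - t) * D).
    { unfold Va. rewrite (n2_ext d _ _ HXb). rewrite n2_lin.
      unfold b.
      rewrite (sumL_ext _ _ (fun p => (1 - t) * (a p * n2 d (cc p)) +
         t * (if Nat.eq_dec j p then n2 d (cc p) else 0))).
      2:{ intros p _. destruct (Nat.eq_dec j p); ring. }
      rewrite sumL_plus, !sumL_scal, (sumL_delta _ j (fun p => n2 d (cc p))) by assumption.
      unfold D, V, Va. fold X. rewrite n2_vsub. rewrite (dot_sym d (cc j) X). ring. }
    assert (HPb : Pa b = (1 - t) * P + t * rr j ^ 2).
    { unfold Pa, b.
      rewrite (sumL_ext _ _ (fun p => (1 - t) * (a p * rr p ^ 2) +
         t * (if Nat.eq_dec j p then rr p ^ 2 else 0))).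
      2:{ intros p _. destruct (Nat.eq_dec j p); ring. }
      rewrite sumL_plus, !sumL_scal, (sumL_delta _ j (fun p => rr p ^ 2)) by assumption.
      reflexivity. }
    assert (HPb0 : 0 < Pa b) by (apply P_pos; exact Hb).
    pose proof (Hmax b Hb) as Hm. unfold ha in Hm. fold V P in Hm.
    apply (Rmult_le_compat_r (Pa b * P)) in Hm; [|nra].
    replace (Va b / Pa b * (Pa b * P)) with (Va b * P) in Hm by (field; lra).
    replace (V / P * (Pa b * P)) with (V * Pa b) in Hm by (field; lra).
    rewrite HVb, HPb in Hm.
    assert (H2 : t * ((1 - t) * D * P) <= t * (V * rr j ^ 2)) by nra.
    apply Rmult_le_reg_l in H2; lra. }
  unfold ha. fold V P.
  destruct (Rle_dec (D * P) (V * rr j ^ 2)) as [Hle|Hgt].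
  - apply (Rmult_le_reg_r P); [exact HP|].
    replace (V / P * rr j ^ 2 * P) with (V * rr j ^ 2) by (field; lra). exact Hle.
  - exfalso. apply Rnot_le_lt in Hgt. clearbody D V P X.
    assert (HDP : 0 < D * P) by nra.
    assert (HD0 : D <> 0) by (intro Hc; rewrite Hc in HDP; lra).
    assert (HP0 : P <> 0) by lra.
    set (t := (D * P - V * rr j ^ 2) / (2 * (D * P))).
    assert (Ht1 : 0 < t) by (unfold t; apply Rdiv_lt_0_compat; lra).
    assert (Ht2 : t <= 1).
    { assert (Htm : t * (2 * (D * P)) = D * P - V * rr j ^ 2) by (unfold t; field; auto).
      assert (0 <= V * rr j ^ 2) by nra. nra. }
    specialize (Key t (conj Ht1 Ht2)).
    assert (Heq : (1 - t) * D * P = (D * P + V * rr j ^ 2) / 2).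
    { unfold t. field. auto. }
    lra.
Qed.

Lemma active p : In p (seq 0 n) -> 0 < a p ->
  n2 d (vsub (cc p) (Xa a)) = ha a * rr p ^ 2.
Proof.
  intros Hp Hap.
  assert (HP : 0 < Pa a) by (apply P_pos; exact Ha).
  assert (Hsum : sumL (seq 0 n) (fun q => a q * (ha a * rr q ^ 2 - n2 d (vsub (cc q) (Xa a)))) = 0).
  { rewrite (sumL_ext _ _ (fun q => ha a * (a q * rr q ^ 2) - a q * n2 d (vsub (cc q) (Xa a))))
      by (intros; ring).
    rewrite sumL_minus, sumL_scal. rewrite <- V_alt by exact Ha. fold (Pa a).
    unfold ha. field. lra. }
  pose proof (sumL_eq0_nonneg _ _ (fun q Hq => Rmult_le_pos _ _ (proj1 Ha q Hq)
     (Rge_le _ _ (Rge_minus _ _ (Rle_ge _ _ (envelope q Hq))))) Hsum p Hp) as H.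
  apply Rmult_integral in H. destruct H as [H|H]; lra.
Qed.

End Env.
End Weights.


Lemma length_remove l p : NoDup l -> In p l ->
  length (remove Nat.eq_dec p l) = pred (length l).
Proof.
  induction l as [|a l IH]; intros Hnd Hp; [destruct Hp|].
  inversion Hnd; subst. simpl remove.
  destruct (Nat.eq_dec p a) as [e|ne].
  - subst. rewrite notin_remove by assumption. reflexivity.
  - destruct Hp as [e|Hp]; [congruence|]. simpl length. rewrite IH by assumption.
    destruct l; [destruct Hp|]. reflexivity.
Qed.

Lemma NoDup_remove_nat l p : NoDup l -> NoDup (remove Nat.eq_dec p l).
Proof.
  induction l as [|a l IH]; intros Hnd; simpl; [constructor|].
  inversion Hnd; subst. destruct (Nat.eq_dec p a); [apply IH; assumption|].
  constructor; [|apply IH; assumption].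
  intros Hin. apply in_remove in Hin. destruct Hin; contradiction.
Qed.

Lemma homog (m : nat) : forall (l : list nat) (F : nat -> nat -> R),
  NoDup l -> (m < length l)%nat ->
  exists mu : nat -> R, (exists p, In p l /\ mu p <> 0) /\
    forall j, (j < m)%nat -> sumL l (fun p => mu p * F j p) = 0.
Proof.
  induction m as [|m IH]; intros l F Hnd Hlen.
  - destruct l as [|p0 l]; [simpl in Hlen; lia|].
    exists (fun _ => 1). split; [exists p0; split; [left; reflexivity| lra]|].
    intros j Hj; lia.
  - destruct (classic (exists p0, In p0 l /\ F m p0 <> 0)) as [[p0 [Hp0 Hf]]|Hno].
    + set (l' := remove Nat.eq_dec p0 l).
      set (F' := fun j p => F j p - F j p0 * F m p / F m p0).
      assert (Hnd' : NoDup l') by (apply NoDup_remove_nat; assumption).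
      assert (Hlen' : (m < length l')%nat) by (unfold l'; rewrite length_remove by assumption; lia).
      destruct (IH l' F' Hnd' Hlen') as [mu' [[p1 [Hp1 Hmu1]] Hsum']].
      set (S0 := sumL l' (fun q => mu' q * F m q)).
      set (mu := fun p => if Nat.eq_dec p p0 then - S0 / F m p0 else mu' p).
      assert (Hl'mu : forall g, sumL l' (fun q => mu q * g q) = sumL l' (fun q => mu' q * g q)).
      { intros g. apply sumL_ext. intros q Hq. unfold mu.
        destruct (Nat.eq_dec q p0) as [e|ne]; [|reflexivity].
        subst. exfalso. exact (remove_In _ _ _ Hq). }
      exists mu. split.
      * exists p1. apply in_remove in Hp1. destruct Hp1 as [Hp1 Hne].
        split; [exact Hp1|]. unfold mu. destruct (Nat.eq_dec p1 p0); [contradiction|exact Hmu1].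
      * intros j Hj.
        rewrite (sumL_remove l p0) by assumption. fold l'. rewrite Hl'mu.
        unfold mu at 1. destruct (Nat.eq_dec p0 p0) as [_|c]; [|congruence].
        destruct (Nat.eq_dec j m) as [e|ne].
        { subst j. fold S0. field. exact Hf. }
        assert (Hj' : (j < m)%nat) by lia.
        specialize (Hsum' j Hj'). unfold F' in Hsum'.
        rewrite (sumL_ext _ _ (fun q => mu' q * F j q - (F j p0 / F m p0) * (mu' q * F m q))) in Hsum'
          by (intros; field; exact Hf).
        rewrite sumL_minus, sumL_scal in Hsum'. fold S0 in Hsum'.
        replace (- S0 / F m p0 * F j p0) with (- (F j p0 / F m p0 * S0)) by (field; exact Hf).
        lra.
    + assert (Hz : forall p, In p l -> F m p = 0).
      { intros p Hp. destruct (Req_dec (F m p) 0) as [e|ne]; [exact e|].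
        exfalso; apply Hno; exists p; split; assumption. }
      destruct (IH l F Hnd ltac:(lia)) as [mu [Hnz Hs]].
      exists mu. split; [exact Hnz|].
      intros j Hj. destruct (Nat.eq_dec j m) as [e|ne].
      * subst j. rewrite (sumL_ext _ _ (fun _ => 0)); [apply sumL_zero|].
        intros p Hp. rewrite Hz by assumption. ring.
      * apply Hs. lia.
Qed.

Lemma sumL_filter (f : nat -> bool) l g :
  sumL (filter f l) g = sumL l (fun p => if f p then g p else 0).
Proof.
  induction l as [|a l IH]; simpl; [reflexivity|].
  destruct (f a); rewrite ?sumL_cons, IH; ring.
Qed.

Lemma filter_length_lt (f : nat -> bool) l p : In p l -> f p = false ->
  (length (filter f l) < length l)%nat.
Proof.
  induction l as [|a l IH]; intros Hp Hf; [destruct Hp|].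
  pose proof (filter_length_le f l) as Hle.
  simpl. destruct Hp as [<-|Hp].
  - rewrite Hf. lia.
  - destruct (f a); simpl; specialize (IH Hp Hf); lia.
Qed.

Lemma exists_argmin (Q : nat -> Prop) (g : nat -> R) l :
  (forall p, Q p \/ ~ Q p) ->
  (exists p, In p l /\ Q p) ->
  exists p0, In p0 l /\ Q p0 /\ forall q, In q l -> Q q -> g p0 <= g q.
Proof.
  intros Hdec. induction l as [|a l IH]; intros [p [Hp HQ]]; [destruct Hp|].
  destruct (classic (exists p, In p l /\ Q p)) as [Hex|Hnex].
  - destruct (IH Hex) as [p0 [Hp0 [HQ0 Hmin]]].
    destruct (Hdec a) as [Qa|nQa].
    + destruct (Rle_dec (g a) (g p0)).
      * exists a. split; [left; reflexivity|]. split; [exact Qa|].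
        intros q [<-|Hq] HQq; [lra|]. specialize (Hmin q Hq HQq). lra.
      * exists p0. split; [right; exact Hp0|]. split; [exact HQ0|].
        intros q [<-|Hq] HQq; [lra|]. apply Hmin; assumption.
    + exists p0. split; [right; exact Hp0|]. split; [exact HQ0|].
      intros q [<-|Hq] HQq; [contradiction|]. apply Hmin; assumption.
  - destruct Hp as [<-|Hp]; [|exfalso; apply Hnex; exists p; split; assumption].
    exists a. split; [left; reflexivity|]. split; [exact HQ|].
    intros q [<-|Hq] HQq; [lra|]. exfalso; apply Hnex; exists q; split; assumption.
Qed.

Lemma carath (d : nat) (u : nat -> point) : forall N (l : list nat) (w : nat -> R),
  (length l <= N)%nat -> NoDup l -> l <> nil -> (forall p, In p l -> 0 < w p) ->
  (forall k, (k < d)%nat -> sumL l (fun p => w p * u p k) = 0) ->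
  exists l' w', incl l' l /\ NoDup l' /\ l' <> nil /\ (length l' <= S d)%nat /\
    (forall p, In p l' -> 0 < w' p) /\
    (forall k, (k < d)%nat -> sumL l' (fun p => w' p * u p k) = 0).
Proof.
  induction N as [|N IH]; intros l w Hlen Hnd Hne Hw Hs.
  { destruct l; [congruence|simpl in Hlen; lia]. }
  destruct (le_lt_dec (length l) (S d)) as [Hsm|Hbig].
  { exists l, w. repeat split; auto. intros x; auto. }
  set (F := fun j p => if Nat.ltb j d then u p j else 1).
  destruct (homog (S d) l F Hnd Hbig) as [mu0 [[p1 [Hp1 Hmu1]] Hmu]].
  set (sg := if Rlt_dec 0 (mu0 p1) then 1 else -1).
  set (mu := fun p => sg * mu0 p).
  assert (Hmu1' : 0 < mu p1).
  { unfold mu, sg. destruct (Rlt_dec 0 (mu0 p1)); [lra|]. lra. }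
  assert (Hmuk : forall k, (k < d)%nat -> sumL l (fun p => mu p * u p k) = 0).
  { intros k Hk. specialize (Hmu k ltac:(lia)). unfold F in Hmu.
    rewrite (sumL_ext _ _ (fun p => mu0 p * u p k)) in Hmu.
    2:{ intros. destruct (Nat.ltb_spec k d); [reflexivity|lia]. }
    unfold mu. rewrite (sumL_ext _ _ (fun p => sg * (mu0 p * u p k))) by (intros; ring).
    rewrite sumL_scal, Hmu. ring. }
  assert (Hmus : sumL l mu = 0).
  { specialize (Hmu d ltac:(lia)). unfold F in Hmu.
    rewrite (sumL_ext _ _ mu0) in Hmu.
    2:{ intros. destruct (Nat.ltb_spec d d); [lia|ring]. }
    unfold mu. rewrite sumL_scal, Hmu. ring. }
  destruct (exists_argmin (fun p => 0 < mu p) (fun p => w p / mu p) l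
     (fun p => classic _) (ex_intro _ p1 (conj Hp1 Hmu1'))) as [p0 [Hp0 [Hm0 Hmin]]].
  set (th := w p0 / mu p0).
  assert (Hth : 0 < th) by (unfold th; apply Rdiv_lt_0_compat; [apply Hw; exact Hp0|exact Hm0]).
  set (w2 := fun p => w p - th * mu p).
  assert (Hw2 : forall p, In p l -> 0 <= w2 p).
  { intros p Hp. unfold w2. destruct (Rlt_dec 0 (mu p)) as [Hpos|Hnp].
    - specialize (Hmin p Hp Hpos). fold th in Hmin.
      apply (Rmult_le_compat_r (mu p)) in Hmin; [|lra].
      replace (w p / mu p * mu p) with (w p) in Hmin by (field; lra). lra.
    - specialize (Hw p Hp). nra. }
  assert (Hw20 : w2 p0 = 0) by (unfold w2, th; field; lra).
  set (f := fun p => if Rlt_dec 0 (w2 p) then true else false).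
  set (l2 := filter f l).
  assert (Hf0 : f p0 = false) by (unfold f; destruct (Rlt_dec 0 (w2 p0)); [lra|reflexivity]).
  assert (Hlen2 : (length l2 < length l)%nat) by (apply (filter_length_lt f l p0); assumption).
  assert (Hsum2 : forall g, sumL l2 (fun p => w2 p * g p) = sumL l (fun p => w2 p * g p)).
  { intros g. unfold l2. rewrite sumL_filter. apply sumL_ext. intros p Hp.
    unfold f. destruct (Rlt_dec 0 (w2 p)) as [|Hn]; [reflexivity|].
    assert (w2 p = 0) by (specialize (Hw2 p Hp); lra). rewrite H. ring. }
  assert (Hin2 : forall p, In p l2 <-> In p l /\ 0 < w2 p).
  { intros p. unfold l2. rewrite filter_In. unfold f.
    destruct (Rlt_dec 0 (w2 p)); split; intros [H1 H2]; auto; congruence. }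
  assert (Hne2 : l2 <> nil).
  { intros Hnil.
    assert (Hs2 : sumL l w2 = sumL l w) by
      (unfold w2; rewrite sumL_minus, sumL_scal, Hmus; ring).
    assert (Hpos : 0 < sumL l w) by (apply sumL_pos; assumption).
    specialize (Hsum2 (fun _ => 1)). rewrite Hnil, sumL_nil in Hsum2.
    rewrite (sumL_ext l _ w2) in Hsum2 by (intros; ring). lra. }
  destruct (IH l2 w2 ltac:(lia) ltac:(apply NoDup_filter; exact Hnd) Hne2
     ltac:(intros p Hp; apply Hin2; exact Hp)) as [l' [w' [Hi [Hn' [Hne' [Hl' [Hp' Hs']]]]]]].
  { intros k Hk. rewrite (Hsum2 (fun p => u p k)). unfold w2.
    rewrite (sumL_ext _ _ (fun p => w p * u p k - th * (mu p * u p k))) by (intros; ring).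
    rewrite sumL_minus, sumL_scal, Hs, Hmuk by exact Hk. ring. }
  exists l', w'. repeat split; auto.
  intros x Hx. apply Hi in Hx. apply Hin2 in Hx. apply Hx.
Qed.


Lemma n2_self d a : n2 d (vsub a a) = 0.
Proof. rewrite n2_vsub. unfold n2. ring. Qed.

Lemma dsum_sq l b :
  sumL l (fun p => sumL l (fun q => (b p - b q) ^ 2)) =
  2 * INR (length l) * sumL l (fun p => b p ^ 2) - 2 * (sumL l b) ^ 2.
Proof.
  rewrite (sumL_ext _ _ (fun p => sumL l (fun q => b p ^ 2 + (- 2 * (b p * b q) + b q ^ 2)))).
  2:{ intros; apply sumL_ext; intros; ring. }
  rewrite (sumL_ext _ _ (fun p => INR (length l) * b p ^ 2 + (- 2 * (b p * sumL l b) + sumL l (fun q => b q ^ 2)))).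
  2:{ intros p _. rewrite !sumL_plus, sumL_const, sumL_scal, sumL_scal. ring. }
  rewrite !sumL_plus, sumL_scal, sumL_scal, sumL_scalr, sumL_const. ring.
Qed.

Lemma final_ineq (d : nat) (Sl : list nat) (g rho : nat -> R) (u : nat -> point) (T L : R) :
  (1 <= d)%nat -> NoDup Sl -> Sl <> nil -> (length Sl <= S d)%nat ->
  (forall p, In p Sl -> 0 < g p) -> (forall p, In p Sl -> 0 < rho p) ->
  (forall k, (k < d)%nat -> sumL Sl (fun p => g p * u p k) = 0) ->
  (forall p, In p Sl -> n2 d (u p) = T * rho p ^ 2) ->
  (forall p q, In p Sl -> In q Sl -> p <> q -> n2 d (vsub (u p) (u q)) <= L ^ 2 * (rho p + rho q) ^ 2) ->
  T <= L ^ 2 * (2 * INR d / (INR d + 1)).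
Proof.
  intros Hd Hnd Hne Hlen Hg Hrho Hs Hu Hpair.
  set (Ga := sumL Sl g).
  set (P := sumL Sl (fun p => g p * rho p ^ 2)).
  set (B := sumL Sl (fun p => g p * rho p)).
  set (Q := sumL Sl (fun p => (g p * rho p) ^ 2)).
  assert (HGa : 0 < Ga) by (apply sumL_pos; assumption).
  assert (HP : 0 < P).
  { apply sumL_pos; [assumption|]. intros p Hp. specialize (Hg p Hp). specialize (Hrho p Hp).
    apply Rmult_lt_0_compat; [lra| apply pow_lt; lra]. }
  assert (HQ : 0 <= Q) by (apply sumL_nonneg; intros; apply pow2_ge_0).
  assert (Hdot : sumL Sl (fun p => sumL Sl (fun q => g p * g q * dot d (u p) (u q))) = 0).
  { unfold dot.
    rewrite (sumL_ext _ _ (fun p => sumL (seq 0 d) (fun k => sumL Sl (fun q => (g p * u p k) * (g q * u q k))))).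
    2:{ intros p _. rewrite sumL_swap. apply sumL_ext. intros k _.
        rewrite <- sumL_scal. apply sumL_ext. intros q _. ring. }
    rewrite sumL_swap.
    rewrite (sumL_ext _ _ (fun _ => 0)); [apply sumL_zero|].
    intros k Hk. apply in_seq in Hk.
    rewrite sumL_prod. rewrite Hs by lia. ring. }
  assert (Hgn : sumL Sl (fun p => g p * n2 d (u p)) = T * P).
  { rewrite (sumL_ext Sl (fun p => g p * n2 d (u p)) (fun p => T * (g p * rho p ^ 2))).
    2:{ intros p Hp. rewrite Hu by exact Hp. ring. }
    apply sumL_scal. }
  assert (E1 : sumL Sl (fun p => sumL Sl (fun q => g p * g q * n2 d (u p))) = T * P * Ga).
  { rewrite <- Hgn. unfold Ga. rewrite <- sumL_prod. apply sumL_ext; intros; apply sumL_ext; intros; ring. }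
  assert (E2 : sumL Sl (fun p => sumL Sl (fun q => g p * g q * n2 d (u q))) = Ga * (T * P)).
  { rewrite <- Hgn. unfold Ga. rewrite <- sumL_prod. apply sumL_ext; intros; apply sumL_ext; intros; ring. }
  assert (HA : sumL Sl (fun p => sumL Sl (fun q => g p * g q * n2 d (vsub (u p) (u q)))) = 2 * Ga * T * P).
  { transitivity (sumL Sl (fun p => sumL Sl (fun q => g p * g q * n2 d (u p))) +
       (- 2 * sumL Sl (fun p => sumL Sl (fun q => g p * g q * dot d (u p) (u q))) +
        sumL Sl (fun p => sumL Sl (fun q => g p * g q * n2 d (u q))))).
    - rewrite <- sumL_scal, <- !sumL_plus. apply sumL_ext; intros p _.
      rewrite <- sumL_scal, <- !sumL_plus. apply sumL_ext; intros q _.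
      rewrite n2_vsub; ring.
    - rewrite E1, E2, Hdot. ring. }
  assert (HB : sumL Sl (fun p => sumL Sl (fun q => g p * g q * n2 d (vsub (u p) (u q)))) <=
     L ^ 2 * (2 * Ga * P + 2 * B ^ 2 - 4 * Q)).
  { apply Rle_trans with (sumL Sl (fun p => sumL Sl (fun q => L ^ 2 * (g p * g q * (rho p + rho q) ^ 2)
         - (if Nat.eq_dec p q then L ^ 2 * (4 * (g q * rho q) ^ 2) else 0)))).
    - apply sumL_le. intros p Hp. apply sumL_le. intros q Hq.
      destruct (Nat.eq_dec p q) as [e|ne].
      + subst q. rewrite n2_self. specialize (Hg p Hp). nra.
      + specialize (Hpair p q Hp Hq ne). pose proof (Hg p Hp). pose proof (Hg q Hq).
        assert (0 < g p * g q) by (apply Rmult_lt_0_compat; lra).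
        assert (0 <= L ^ 2) by apply pow2_ge_0. nra.
    - apply Req_le.
      assert (F1 : forall p, sumL Sl (fun q => L ^ 2 * (g p * g q * (rho p + rho q) ^ 2)) =
          L ^ 2 * (Ga * (g p * rho p ^ 2) + (2 * B * (g p * rho p) + P * g p))).
      { intros p.
        rewrite (sumL_ext Sl (fun q => L ^ 2 * (g p * g q * (rho p + rho q) ^ 2))
          (fun q => L ^ 2 * ((g p * rho p ^ 2) * g q + (2 * (g p * rho p) * (g q * rho q) + g p * (g q * rho q ^ 2)))))
          by (intros; ring).
        rewrite sumL_scal, !sumL_plus, !sumL_scal. unfold Ga, B, P. ring. }
      rewrite (sumL_ext Sl _ (fun p => L ^ 2 * (Ga * (g p * rho p ^ 2) + (2 * B * (g p * rho p) + (P * g p + (-4) * (g p * rho p) ^ 2))))).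
      2:{ intros p Hp. rewrite sumL_minus, F1.
          rewrite (sumL_delta Sl p (fun q => L ^ 2 * (4 * (g q * rho q) ^ 2))) by assumption. ring. }
      rewrite sumL_scal, !sumL_plus, !sumL_scal. fold Ga P B Q. ring. }
  assert (HC : B ^ 2 <= INR (length Sl) * Q).
  { pose proof (dsum_sq Sl (fun p => g p * rho p)) as H.
    assert (0 <= sumL Sl (fun p => sumL Sl (fun q => (g p * rho p - g q * rho q) ^ 2))).
    { apply sumL_nonneg; intros; apply sumL_nonneg; intros; apply pow2_ge_0. }
    cbv beta in H. fold B Q in H. lra. }
  assert (HD : B ^ 2 <= Ga * P).
  { assert (H0 : 0 <= sumL Sl (fun p => sumL Sl (fun q => g p * g q * (rho p - rho q) ^ 2))).
    { apply sumL_nonneg; intros p Hp; apply sumL_nonneg; intros q Hq.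
      pose proof (Hg p Hp); pose proof (Hg q Hq). apply Rmult_le_pos; [nra|apply pow2_ge_0]. }
    rewrite (sumL_ext Sl _ (fun p => Ga * (g p * rho p ^ 2) + (-2 * B * (g p * rho p) + P * g p))) in H0.
    2:{ intros p _.
        rewrite (sumL_ext Sl _ (fun q => (g p * rho p ^ 2) * g q + ((-2) * (g p * rho p) * (g q * rho q) + g p * (g q * rho q ^ 2))))
          by (intros; ring).
        rewrite !sumL_plus, !sumL_scal. unfold Ga, B, P. ring. }
    rewrite !sumL_plus, !sumL_scal in H0. fold Ga P B in H0. lra. }
  assert (Hk : INR (length Sl) <= INR d + 1).
  { rewrite <- S_INR. apply le_INR. exact Hlen. }
  assert (Hd1 : 1 <= INR d) by (change 1 with (INR 1); apply le_INR; exact Hd).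
  assert (HE : Ga * T * P <= L ^ 2 * (Ga * P + B ^ 2 - 2 * Q)) by lra.
  assert (HF : (INR d + 1) * (B ^ 2 - 2 * Q) <= (INR d - 1) * (Ga * P)).
  { assert (INR (length Sl) * Q <= (INR d + 1) * Q) by nra. nra. }
  assert (HG : (INR d + 1) * (Ga * P) * T <= (INR d + 1) * (Ga * P) * (L ^ 2 * (2 * INR d / (INR d + 1)))).
  { replace ((INR d + 1) * (Ga * P) * (L ^ 2 * (2 * INR d / (INR d + 1)))) with
      (L ^ 2 * (2 * INR d) * (Ga * P)) by (field; lra).
    assert (0 <= L ^ 2) by apply pow2_ge_0.
    nra. }
  apply Rmult_le_reg_l in HG; [exact HG|].
  apply Rmult_lt_0_compat; [lra|nra].
Qed.


Lemma ha_ext d n cc rr a b : (forall p, In p (seq 0 n) -> a p = b p) ->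
  ha d n cc rr a = ha d n cc rr b.
Proof.
  intros H. unfold ha, Va, Pa.
  assert (HX : forall k, Xa n cc a k = Xa n cc b k).
  { intros k; unfold Xa; apply sumL_ext; intros p Hp; rewrite H by exact Hp; reflexivity. }
  rewrite (n2_ext d _ _ HX).
  rewrite (sumL_ext _ (fun p => a p * n2 d (cc p)) (fun p => b p * n2 d (cc p))) by (intros p Hp; rewrite H by exact Hp; reflexivity).
  rewrite (sumL_ext _ (fun p => a p * rr p ^ 2) (fun p => b p * rr p ^ 2)) by (intros p Hp; rewrite H by exact Hp; reflexivity).
  reflexivity.
Qed.

Module MC.
From HB Require Import structures.
From mathcomp Require Import all_boot all_order all_algebra.
From mathcomp Require Import all_classical all_reals all_analysis.
From mathcomp Require Import Rstruct Rstruct_topology.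
Unset Printing Implicit Defensive.
Import Order.TTheory GRing.Theory Num.Theory.
Import numFieldNormedType.Exports.
Local Open Scope classical_set_scope.
Local Open Scope ring_scope.

Definition simpl_set n : set 'rV[R]_n :=
  [set v | (forall i, 0 <= v ord0 i) /\ \sum_i v ord0 i = 1].

Lemma cont_bigsum {T : topologicalType} {I : Type} (l : seq I) (F : I -> T -> R) x :
  (forall i, {for x, continuous (F i)}) ->
  {for x, continuous (fun y => \sum_(i <- l) F i y)}.
Proof.
move=> hF; elim: l => [|i l IH].
  have -> : (fun y => \sum_(i <- [::]) F i y) = (fun _ => 0) by apply: funext => y; rewrite big_nil.
  exact: cst_continuous.
have -> : (fun y => \sum_(j <- i :: l) F j y) = (F i + (fun y => \sum_(j <- l) F j y)).
  by apply: funext => y; rewrite big_cons.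
exact: (@continuousD R R^o T _ _ x (hF i) IH).
Qed.

Lemma simplex_max_mc n (f : 'rV[R]_n -> R) :
  leq 1 n ->
  (forall v, simpl_set n v -> {for v, continuous f}) ->
  exists2 v, v \in simpl_set n & forall w, w \in simpl_set n -> f w <= f v.
Proof.
move=> n0 cf.
have ne : simpl_set n !=set0.
  exists (\row_i (if val i == 0%nat then 1 else 0)); rewrite /simpl_set /=; split.
    by move=> i; rewrite mxE; case: ifP => _; [exact: ler01 | exact: lexx].
  rewrite (bigD1 (Ordinal n0)) //= mxE /= big1 ?addr0 // => i hi; rewrite mxE.
  case: ifP => // /eqP h; move: hi; suff -> : i = Ordinal n0 by rewrite eqxx.
  by apply: val_inj.
have cf' : {within simpl_set n, continuous f}.
  apply: continuous_in_subspaceT => v; rewrite in_setE; exact: cf.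
apply: EVT_max_rV => //.
apply: (@subclosed_compact _ _ [set v : 'rV[R]_n | forall i, `[0, 1]%classic (v ord0 i)]).
- have -> : simpl_set n = (\bigcap_(i in setT) ((fun v : 'rV[R]_n => v ord0 i) @^-1` [set x | 0 <= x]))
     `&` ((fun v : 'rV[R]_n => \sum_i v ord0 i) @^-1` [set x | x = 1]).
    apply/seteqP; split => v /=.
      by move=> [h1 h2]; split => // i _; exact: h1.
    by move=> [h1 h2]; split => // i; exact: h1.
  apply: closedI.
    apply: closed_bigI => i _; apply: preimage_closed; last exact: closed_ge.
    by move=> x _; exact: coord_continuous.
  apply: preimage_closed; last exact: closed_eq.
  move=> x _; apply: cont_bigsum => i; exact: coord_continuous.
- apply: (@rV_compact _ n (fun=> `[(0:R), 1]%classic)) => i; exact: segment_compact.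
- move=> v [h1 h2] i /=; rewrite in_itv /= h1 /=.
  rewrite -h2 (bigD1 i) //= lerDl sumr_ge0 //.
Qed.

Section Cont.
Variables (n : nat) (v0 : 'rV[R]_n).
Definition C (F : 'rV[R]_n -> R) := {for v0, continuous F}.

Lemma c_const c : C (fun _ => c).
Proof. exact: cst_continuous. Qed.

Lemma c_plus F G : C F -> C G -> C (fun v => Rplus (F v) (G v)).
Proof.
move=> hF hG.
have -> : (fun v => Rplus (F v) (G v)) = (F + G) by apply: funext.
exact: (@continuousD R R^o _ _ _ v0 hF hG).
Qed.

Lemma c_mult F G : C F -> C G -> C (fun v => Rmult (F v) (G v)).
Proof.
move=> hF hG.
have -> : (fun v => Rmult (F v) (G v)) = (F \* G) by apply: funext.
exact: (@continuousM R _ F G v0 hF hG).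
Qed.

Lemma c_opp F : C F -> C (fun v => Ropp (F v)).
Proof.
move=> hF.
have -> : (fun v => Ropp (F v)) = (fun v => - F v) by apply: funext.
exact: (@continuousN R R^o _ _ v0 hF).
Qed.

Lemma c_inv F : F v0 <> 0%R -> C F -> C (fun v => Rinv (F v)).
Proof.
move=> h0 hF.
have -> : (fun v => Rinv (F v)) = (fun v => (F v)^-1) by apply: funext.
apply: (@continuousV R _ F v0) => //. by apply/eqP.
Qed.

Lemma c_sumL l (F : nat -> 'rV[R]_n -> R) :
  (forall p, C (F p)) -> C (fun v => sumL l (fun p => F p v)).
Proof.
move=> hF; elim: l => [|a l IH] /=.
  exact: c_const.
exact: c_plus.
Qed.

Definition toF (v : 'rV[R]_n) (p : nat) : R :=
  \sum_(i < n) (if nat_of_ord i == p then v ord0 i else 0).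

Lemma c_toF p : C (fun v => toF v p).
Proof.
rewrite /C /toF; apply: cont_bigsum => i.
case: (nat_of_ord i == p).
  exact: coord_continuous.
exact: cst_continuous.
Qed.

End Cont.
Arguments toF {n}.

Lemma sumL_bigseq l (f : nat -> R) : sumL l f = \sum_(p <- l) f p.
Proof. elim: l => [|a l IH] /=; [by rewrite big_nil | by rewrite big_cons IH]. Qed.

Lemma seq_iota s k : List.seq s k = iota s k.
Proof. by elim: k s => [|k IH] s //=; rewrite IH. Qed.

Lemma sumL_big n (f : nat -> R) : sumL (List.seq 0 n) f = \sum_(i < n) f i.
Proof.
by rewrite sumL_bigseq seq_iota -(big_mkord xpredT) /index_iota subn0.
Qed.

Lemma toF_val n (v : 'rV[R]_n) p (h : leq p.+1 n) : toF v p = v ord0 (Ordinal h).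
Proof.
rewrite /toF (bigD1 (Ordinal h)) //= eqxx big1 ?addr0 // => i hi.
case: ifP => // /eqP e; move: hi; suff -> : i = Ordinal h by rewrite eqxx.
by apply: val_inj.
Qed.

Arguments toF_val {n} v {p} h.

Lemma toF_ord n (v : 'rV[R]_n) (i : 'I_n) : toF v i = v ord0 i.
Proof. by rewrite (toF_val v (ltn_ord i)); congr (v ord0 _); apply: val_inj. Qed.

Arguments toF_ord {n} v i.

Lemma toF_simplex n (v : 'rV[R]_n) : simpl_set n v -> simplex n (toF v).
Proof.
move=> [h1 h2]; split.
  move=> p /in_seq [_ hp]. have hp' : leq p.+1 n by apply/ssrnat.ltP; lia.
  rewrite (toF_val v hp'); apply/RleP; exact: h1.
rewrite sumL_big; transitivity (\sum_i v ord0 i); last exact: h2.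
apply: eq_bigr => i _; exact: toF_ord.
Qed.

Arguments toF_simplex {n} v.
Arguments simplex_max_mc {n} f.

Lemma ha_max d n cc rr : Peano.lt 0 n -> (forall p, In p (List.seq 0 n) -> Rlt 0 (rr p)) ->
  exists a, simplex n a /\ forall b, simplex n b -> Rle (ha d n cc rr b) (ha d n cc rr a).
Proof.
move=> n0 hr.
pose f := fun v : 'rV[R]_n => ha d n cc rr (toF v).
have cf : forall v, simpl_set n v -> {for v, continuous f}.
  move=> v hv.
  have hP := P_pos n rr hr (toF v) (toF_simplex v hv).
  rewrite /f /ha /Rdiv /Va /Pa /Rminus.
  apply: c_mult.
    apply: c_plus.
      apply: c_sumL => p; apply: c_mult; [exact: c_toF | exact: c_const].
    apply: c_opp. rewrite /n2 /dot.
    apply: c_sumL => k; apply: c_mult; rewrite /Xa;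
      (apply: c_sumL => p; apply: c_mult; [exact: c_toF | exact: c_const]).
  apply: c_inv.
    move=> e. rewrite /Pa in hP. rewrite e in hP. exact: (Rlt_irrefl _ hP).
  apply: c_sumL => p; apply: c_mult; [exact: c_toF | exact: c_const].
have n0' : leq 1 n by apply/ssrnat.ltP.
have [v hv hmax] := simplex_max_mc f n0' cf.
rewrite in_setE in hv.
exists (toF v); split; first exact: toF_simplex.
move=> b [hb1 hb2].
pose w : 'rV[R]_n := \row_i b (nat_of_ord i).
have hw : simpl_set n w.
  split.
    move=> i; rewrite mxE; apply/RleP; apply: hb1; apply/in_seq; split; [lia|].
    have := ltn_ord i => /ssrnat.ltP; lia.
  transitivity (sumL (List.seq 0 n) b); last exact: hb2. rewrite sumL_big; apply: eq_bigr => i _; by rewrite mxE.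
have := hmax w; rewrite in_setE => /(_ hw) /RleP.
rewrite /f (ha_ext d n cc rr (toF w) b) //.
move=> p /in_seq [_ hp]. have hp' : leq p.+1 n by apply/ssrnat.ltP; lia.
by rewrite (toF_val w hp') mxE.
Qed.

End MC.


Lemma n2_vsub_sym d x y : n2 d (vsub x y) = n2 d (vsub y x).
Proof. unfold n2, dot, vsub. apply sumL_ext. intros; ring. Qed.

Lemma pair_bound d y a b al be : edist d y a <= al -> edist d y b <= be ->
  n2 d (vsub a b) <= (al + be) ^ 2.
Proof.
  rewrite !edist_eq. intros Ha Hb.
  set (A := vsub y a). set (B := vsub y b). fold A B in Ha, Hb.
  rewrite (n2_ext d _ (fun k => 1 * B k + (-1) * A k)) by (intros; unfold A, B, vsub; ring).
  rewrite n2_lin.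
  pose proof (cauchy d B A (-1) (or_intror eq_refl)) as Hc.
  pose proof (sqrt_pos (n2 d A)). pose proof (sqrt_pos (n2 d B)).
  rewrite <- (sqrt_sqrt (n2 d A)) by apply n2_nonneg.
  rewrite <- (sqrt_sqrt (n2 d B)) by apply n2_nonneg.
  nra.
Qed.

Theorem mainTheorem4 (d m : nat) (c : nat -> point) (r : nat -> R)
  (lam lam' : R) :
  disk_system m r -> 0 <= lam -> 0 <= lam' ->
  sqrt (2 * INR d / (INR d + 1)) * lam' <= lam ->
  (forall sigma : nat -> Prop, VR d m c r lam' sigma -> Cech d m c r lam sigma) /\
  (forall sigma : nat -> Prop, Cech d m c r lam sigma -> VR d m c r lam sigma).
Proof.
  intros Hdisk Hlam Hlam' Hsq. split.
  2:{ intros sigma [Hne [x Hx]]. split; [exact Hne|].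
      intros i j Hi Hj. exists x. split; apply Hx; assumption. }
  intros sigma [[Hsub [i0 Hi0]] Hpw].
  split; [split; [exact Hsub| exists i0; exact Hi0]|].
  destruct d as [|d'].
  { exists (fun _ => 0). intros i Hi. unfold in_ball, edist. simpl.
    rewrite sqrt_0. pose proof (Hdisk i (Hsub i Hi)). nra. }
  set (d := S d'). change (S d') with d in Hsq.
  set (L := filter (fun i => if excluded_middle_informative (sigma i) then true else false) (seq 0 m)).
  assert (HL : forall i, In i L <-> (i < m)%nat /\ sigma i).
  { intros i. unfold L. rewrite filter_In, in_seq. split.
    - intros [[_ H1] H2]. destruct (excluded_middle_informative (sigma i)); [split; [lia|assumption] | discriminate].
    - intros [H1 H2]. split; [lia|]. destruct (excluded_middle_informative (sigma i)); [reflexivity|contradiction]. }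
  set (n := length L).
  set (cc := fun p => c (nth p L 0%nat)).
  set (rr := fun p => r (nth p L 0%nat)).
  assert (HnL : forall p, In p (seq 0 n) -> In (nth p L 0%nat) L).
  { intros p Hp. apply in_seq in Hp. apply nth_In. unfold n in Hp. lia. }
  assert (Hn : (0 < n)%nat).
  { assert (In i0 L) by (apply HL; split; [apply Hsub; exact Hi0| exact Hi0]).
    unfold n. destruct L; [destruct H|simpl; lia]. }
  assert (Hrr : forall p, In p (seq 0 n) -> 0 < rr p).
  { intros p Hp. unfold rr. apply Hdisk. apply HL. apply HnL. exact Hp. }
  destruct (MC.ha_max d n cc rr Hn Hrr) as [a [Ha Hmax]].
  set (T := ha d n cc rr a).
  set (xs := Xa n cc a).
  assert (Henv : forall j, In j (seq 0 n) -> n2 d (vsub (cc j) xs) <= T * rr j ^ 2).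
  { intros j Hj. apply (envelope d n cc rr Hrr a Ha Hmax j Hj). }
  assert (HT : T <= lam' ^ 2 * (2 * INR d / (INR d + 1))).
  { set (fb := fun p => if Rlt_dec 0 (a p) then true else false).
    set (l := filter fb (seq 0 n)).
    assert (Hinl : forall p, In p l <-> In p (seq 0 n) /\ 0 < a p).
    { intros p. unfold l. rewrite filter_In. unfold fb.
      destruct (Rlt_dec 0 (a p)); split; intros [H1 H2]; auto; congruence. }
    set (u := fun p => vsub (cc p) xs).
    assert (Hzero : forall k, (k < d)%nat -> sumL l (fun p => a p * u p k) = 0).
    { intros k Hk. unfold l. rewrite sumL_filter.
      rewrite (sumL_ext _ _ (fun p => a p * (cc p k - Xa n cc a k))).
      { apply Xa_zero_sum. exact Ha. }
      intros p Hp. unfold fb, u, vsub, xs. destruct (Rlt_dec 0 (a p)); [reflexivity|].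
      assert (a p = 0) by (pose proof (proj1 Ha p Hp); lra). rewrite H. ring. }
    assert (Hlne : l <> nil).
    { intros Hnil.
      assert (sumL (seq 0 n) a = 0).
      { rewrite (sumL_ext _ _ (fun _ => 0)); [apply sumL_zero|].
        intros p Hp. destruct (Rlt_dec 0 (a p)) as [Hpos|Hnp].
        - exfalso. assert (In p l) by (apply Hinl; split; assumption). rewrite Hnil in H. destruct H.
        - pose proof (proj1 Ha p Hp). lra. }
      pose proof (proj2 Ha). lra. }
    destruct (carath d u (length l) l a (le_n _) (NoDup_filter _ (seq_NoDup n 0)) Hlne
       ltac:(intros p Hp; apply Hinl; exact Hp) Hzero)
      as [l' [w' [Hincl [Hnd' [Hne' [Hlen' [Hw' Hs']]]]]]].
    apply (final_ineq d l' w' rr u T lam').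
    - unfold d; lia.
    - exact Hnd'.
    - exact Hne'.
    - exact Hlen'.
    - exact Hw'.
    - intros p Hp. apply Hrr. apply Hinl. apply Hincl. exact Hp.
    - exact Hs'.
    - intros p Hp. apply Hincl, Hinl in Hp. destruct Hp as [Hp Hap].
      unfold u, xs, T. apply (active d n cc rr Hrr a Ha Hmax p Hp Hap).
    - intros p q Hp Hq Hpq.
      apply Hincl, Hinl in Hp. apply Hincl, Hinl in Hq.
      rewrite (n2_ext d _ (vsub (cc p) (cc q))) by (intros; unfold u, vsub; ring).
      assert (Hsp : sigma (nth p L 0%nat)) by (apply HL, HnL, Hp).
      assert (Hsq' : sigma (nth q L 0%nat)) by (apply HL, HnL, Hq).
      destruct (Hpw _ _ Hsp Hsq') as [y [Hy1 Hy2]].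
      unfold in_ball in Hy1, Hy2.
      replace (lam' ^ 2 * (rr p + rr q) ^ 2) with ((lam' * rr p + lam' * rr q) ^ 2) by ring.
      apply (pair_bound d y); assumption. }
  assert (HK : 0 <= 2 * INR d / (INR d + 1)).
  { apply Rmult_le_pos; [pose proof (pos_INR d); lra|].
    apply Rlt_le, Rinv_0_lt_compat. pose proof (pos_INR d); lra. }
  assert (HT2 : T <= lam ^ 2).
  { pose proof (sqrt_pos (2 * INR d / (INR d + 1))) as Hs0.
    pose proof (sqrt_sqrt _ HK) as Hss.
    assert (0 <= sqrt (2 * INR d / (INR d + 1)) * lam') by nra.
    assert ((sqrt (2 * INR d / (INR d + 1)) * lam') ^ 2 <= lam ^ 2) by nra.
    replace ((sqrt (2 * INR d / (INR d + 1)) * lam') ^ 2) with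
      ((sqrt (2 * INR d / (INR d + 1)) * sqrt (2 * INR d / (INR d + 1))) * lam' ^ 2) in H0 by ring.
    rewrite Hss in H0.
    lra. }
  exists xs. intros i Hi.
  assert (HiL : In i L) by (apply HL; split; [apply Hsub; exact Hi| exact Hi]).
  destruct (In_nth L i 0%nat HiL) as [p [Hp Hpi]].
  assert (Hpn : In p (seq 0 n)) by (apply in_seq; unfold n; lia).
  specialize (Henv p Hpn). unfold cc, rr in Henv. rewrite Hpi in Henv.
  unfold in_ball. rewrite edist_eq, n2_vsub_sym.
  assert (Hr : 0 < r i) by (apply Hdisk, Hsub, Hi).
  assert (0 <= r i ^ 2) by (apply pow2_ge_0).
  assert (n2 (S d') (vsub (c i) xs) <= (lam * r i) ^ 2) by (fold d; nra).
  rewrite <- (sqrt_pow2 (lam * r i)) by nra.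
  apply sqrt_le_1_alt. exact H0.
Qed.
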